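(* Let $n\ge 1$ and let $L \subseteq \{0,1\}^n$ be a nonempty homogeneous language. Then every regular expression describing $L$ has length at least $\mathsf{Arith}(L)$, i.e. $\mathrm{rpn}(L) \geq \mathsf{Arith}(L)$.
   Context: Regular expressions over an alphabet $\Sigma$ are built from $\epsilon$ and letters $a\in\Sigma$ by union $+$, concatenation $\cdot$ and star; expressions are assumed not to contain the symbol $\emptyset$. The length $\mathrm{rpn}(R)$ of an expression $R$ is the number of nodes of its syntax tree, and for a regular language $L$, $\mathrm{rpn}(L)$ is the minimum length of an expression describing $L$. A language is homogeneous if all its words have the same length. A monotone arithmetic formula in variables $x_1,\dots,x_n$ is a rooted tree whose leaves hold a variable $x_i$ or a constant $c\in\mathbb{R}_{\ge 0}$ and whose inner nodes are addition or multiplication gates; its size is its number of nodes. It computes a polynomial $\sum_{a\in A} c_a\prod_{i=1}^n x_i^{a_i}$ with all $c_a>0$, and the finite set $A\subseteq\mathbb{N}^n$ of exponent vectors is called the set produced by the formula. For $A\subseteq \mathbb{N}^n$, $\mathsf{Arith}(A)$ is the minimum size of a monotone arithmetic formula producing exactly $A$ (coefficients are irrelevant). A word $w_1\cdots w_n\in\{0,1\}^n$ is identified with the vector $(w_1,\dots,w_n)$. *)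

(* Defs.v *)
From HB Require Import structures.
From mathcomp Require Import all_boot all_order all_algebra.
From mathcomp Require Import Rstruct.
From mathcomp Require Import mpoly.
From Stdlib Require Rdefinitions.
Notation R := Rdefinitions.R.

Set Implicit Arguments.
Unset Strict Implicit.
Unset Printing Implicit Defensive.

Import GRing.Theory Num.Theory.

(* ---------- Regular expressions over Sigma = {0,1} (0 = false, 1 = true) ---------- *)
(* No emptyset symbol, as in the paper. *)
Inductive regex : Type :=
| REps : regex
| RLet : bool -> regex
| RPlus : regex -> regex -> regex
| RCat : regex -> regex -> regex
| RStar : regex -> regex.

Inductive star (L : seq bool -> Prop) : seq bool -> Prop :=
| star_nil : star L [::]
| star_app u v : L u -> star L v -> star L (u ++ v).

Fixpoint lang (r : regex) : seq bool -> Prop :=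
  match r with
  | REps => fun w => w = [::]
  | RLet a => fun w => w = [:: a]
  | RPlus r1 r2 => fun w => lang r1 w \/ lang r2 w
  | RCat r1 r2 => fun w => exists u v, w = u ++ v /\ lang r1 u /\ lang r2 v
  | RStar r1 => star (lang r1)
  end.

Fixpoint rpn (r : regex) : nat :=
  match r with
  | REps | RLet _ => 1
  | RPlus r1 r2 | RCat r1 r2 => (rpn r1 + rpn r2).+1
  | RStar r1 => (rpn r1).+1
  end.

Inductive aformula (n : nat) : Type :=
| FVar : 'I_n -> aformula n
| FConst : R -> aformula n
| FAdd : aformula n -> aformula n -> aformula n
| FMul : aformula n -> aformula n -> aformula n.

Arguments FConst {n}.

Fixpoint monotone n (F : aformula n) : Prop :=
  match F with
  | FVar _ => True
  | FConst c => (0 <= c)%R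
  | FAdd F1 F2 | FMul F1 F2 => monotone F1 /\ monotone F2
  end.

Fixpoint fsize n (F : aformula n) : nat :=
  match F with
  | FVar _ | FConst _ => 1
  | FAdd F1 F2 | FMul F1 F2 => (fsize F1 + fsize F2).+1
  end.

Fixpoint fpoly n (F : aformula n) : {mpoly R[n]} :=
  match F with
  | FVar i => 'X_i
  | FConst c => c%:MP
  | FAdd F1 F2 => fpoly F1 + fpoly F2
  | FMul F1 F2 => fpoly F1 * fpoly F2
  end.

Definition produced n (F : aformula n) : 'X_{1..n} -> Prop :=
  fun m => m \in msupp (fpoly F).

Definition produces n (F : aformula n) (A : 'X_{1..n} -> Prop) : Prop :=
  forall m, produced F m <-> A m.

(* Arith(A) <= k : some monotone formula of size <= k produces exactly A
   (Arith(A) is the minimum such size) *)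
Definition Arith_le n (A : 'X_{1..n} -> Prop) (k : nat) : Prop :=
  exists F : aformula n, monotone F /\ produces F A /\ fsize F <= k.

Definition word_vec n (w : seq bool) : 'X_{1..n} :=
  [multinom (nth false w i : nat) | i < n].

Definition lang_vecs n (L : seq bool -> Prop) : 'X_{1..n} -> Prop :=
  fun m => exists w, L w /\ size w = n /\ m = word_vec n w.

Arguments lang_vecs : clear implicits.
Arguments word_vec : clear implicits.

(* Main.v *)
Require Import Defs.
From HB Require Import structures.
From mathcomp Require Import all_boot all_order all_algebra.
From mathcomp Require Import Rstruct.
From mathcomp Require Import mpoly.
Import GRing.Theory Num.Theory.

Fixpoint len (r : regex) : nat :=
  match r with
  | REps => 0
  | RLet _ => 1
  | RPlus r1 _ => len r1
  | RCat r1 r2 => len r1 + len r2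
  | RStar _ => 0
  end.

Lemma lang_ne r : exists w, lang r w.
Proof.
elim: r => [|a|r1 [u Hu] r2 [v Hv]|r1 [u Hu] r2 [v Hv]|r1 _] /=.
- by exists [::].
- by exists [:: a].
- by exists u; left.
- by exists (u ++ v), u, v.
- exists [::]; exact: star_nil.
Qed.

Lemma homog_len r l : (forall w, lang r w -> size w = l) -> l = len r.
Proof.
elim: r l => [|a|r1 IH1 r2 IH2|r1 IH1 r2 IH2|r1 IH1] l H /=.
- by rewrite -(H [::]).
- by rewrite -(H [:: a]).
- apply: IH1 => w Hw; apply: H; by left.
- have [u0 Hu0] := lang_ne r1; have [v0 Hv0] := lang_ne r2.
  have E1 : l - size v0 = len r1.
    apply: IH1 => u Hu; rewrite -(H (u ++ v0)); last by exists u, v0.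
    by rewrite size_cat addnK.
  have E2 : l - size u0 = len r2.
    apply: IH2 => v Hv; rewrite -(H (u0 ++ v)); last by exists u0, v.
    by rewrite size_cat addKn.
  have Hl := H (u0 ++ v0) (ex_intro _ u0 (ex_intro _ v0 (conj erefl (conj Hu0 Hv0)))).
  rewrite size_cat in Hl.
  by rewrite -E1 -E2 -Hl addKn addnK addnC.
- by rewrite -(H [::]) //; exact: star_nil.
Qed.

Lemma homog_cat r1 r2 :
  (forall w, lang (RCat r1 r2) w -> size w = len (RCat r1 r2)) ->
  (forall u, lang r1 u -> size u = len r1) /\ (forall v, lang r2 v -> size v = len r2).
Proof.
move=> H.
have [u0 Hu0] := lang_ne r1; have [v0 Hv0] := lang_ne r2.
have S1 : forall u, lang r1 u -> size u = len r1 + len r2 - size v0.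
  move=> u Hu; have := H (u ++ v0); rewrite size_cat /= => <-; last by exists u, v0.
  by rewrite addnK.
have S2 : forall v, lang r2 v -> size v = len r1 + len r2 - size u0.
  move=> v Hv; have := H (u0 ++ v); rewrite size_cat /= => <-; last by exists u0, v.
  by rewrite addKn.
have E1 := @homog_len _ _ S1; have E2 := @homog_len _ _ S2.
by split => ? ?; [rewrite -E1; apply: S1 | rewrite -E2; apply: S2].
Qed.

Lemma homog_plus r1 r2 :
  (forall w, lang (RPlus r1 r2) w -> size w = len (RPlus r1 r2)) ->
  (forall u, lang r1 u -> size u = len r1) /\ (forall v, lang r2 v -> size v = len r2).
Proof.
move=> H.
have S1 : forall u, lang r1 u -> size u = len r1 by move=> u Hu; apply: H; left.
have S2 : forall u, lang r2 u -> size u = len r1 by move=> u Hu; apply: H; right.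
by have E := @homog_len _ _ S2; rewrite -E.
Qed.

Lemma homog_star r1 w :
  (forall w, lang (RStar r1) w -> size w = len (RStar r1)) ->
  lang (RStar r1) w <-> w = [::].
Proof.
move=> H; split.
- by move/H => /= /size0nil.
- move=> ->; exact: star_nil.
Qed.

Section Tr.
Variable n : nat.

Fixpoint tr (r : regex) (k : nat) : aformula n :=
  match r with
  | REps => FConst 1%R
  | RLet b => if b then (if insub k is Some i then FVar i else FConst 1%R) else FConst 1%R
  | RPlus r1 r2 => FAdd (tr r1 k) (tr r2 k)
  | RCat r1 r2 => FMul (tr r1 k) (tr (r2) (k + len r1))
  | RStar _ => FConst 1%R
  end.

Definition shiftv (k : nat) (w : seq bool) : 'X_{1..n} :=
  [multinom ((if k <= i then nth false w (i - k) else false) : nat) | i < n].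

Definition nonneg (p : {mpoly R[n]}) := forall m, (0 <= p@_m)%R.

Lemma tr_nonneg r k : nonneg (fpoly (tr r k)).
Proof.
have C1 m : (0 <= (1%R : R)%:MP@_m :> R)%R by rewrite mcoeffC mul1r ler0n.
elim: r k => [|[]|r1 IH1 r2 IH2|r1 IH1 r2 IH2|r1 IH1] k m /=; try exact: C1.
- case: (insub k) => [i|] /=; last exact: C1.
  by rewrite mcoeffX ler0n.
- by rewrite mcoeffD; apply: addr_ge0; [exact: IH1|exact: IH2].
- rewrite mcoeffM; apply: sumr_ge0 => i _; apply: mulr_ge0; [exact: IH1|exact: IH2].
Qed.

Lemma tr_monotone r k : monotone (tr r k).
Proof.
elim: r k => [|[]|r1 IH1 r2 IH2|r1 IH1 r2 IH2|r1 IH1] k //=; try exact: ler01.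
by case: (insub k) => //=; exact: ler01.
Qed.

Lemma tr_size r k : fsize (tr r k) <= rpn r.
Proof.
elim: r k => [|[]|r1 IH1 r2 IH2|r1 IH1 r2 IH2|r1 IH1] k //=.
- by case: (insub k).
- by rewrite ltnS leq_add.
- by rewrite ltnS leq_add.
Qed.

Lemma supp_add (p q : {mpoly R[n]}) m : nonneg p -> nonneg q ->
  (m \in msupp (p + q)) = (m \in msupp p) || (m \in msupp q).
Proof. by move=> hp hq; rewrite !mcoeff_msupp mcoeffD paddr_eq0 // negb_and. Qed.

Lemma supp_mul (p q : {mpoly R[n]}) m : nonneg p -> nonneg q ->
  m \in msupp (p * q) <->
  exists m1 m2, m = (m1 + m2)%MM /\ m1 \in msupp p /\ m2 \in msupp q.
Proof.
move=> hp hq; rewrite mcoeff_msupp mcoeffM psumr_neq0; last first.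
  by move=> i _; apply: mulr_ge0; [exact: hp|exact: hq].
split.
- case/hasP => k _ /andP [/eqP Em Hk].
  exists k.1, k.2; split => //.
  have : (p@_k.1 * q@_k.2 != 0)%R by rewrite lt0r in Hk; case/andP: Hk.
  by rewrite mulf_eq0 negb_or !mcoeff_msupp => /andP[].
- case=> m1 [m2 [Em [H1 H2]]].
  have b1 : mdeg m1 < (mdeg m).+1 by rewrite Em mdegD ltnS leq_addr.
  have b2 : mdeg m2 < (mdeg m).+1 by rewrite Em mdegD ltnS leq_addl.
  apply/hasP; exists (BMultinom b1, BMultinom b2); first exact: mem_index_enum.
  rewrite /= Em eqxx /= lt0r; apply/andP; split.
    by apply: mulf_neq0; rewrite -mcoeff_msupp.
  by apply: mulr_ge0; [exact: hp|exact: hq].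
Qed.

End Tr.

Section Tr2.
Variable n : nat.

Lemma shiftv_cat k u v :
  shiftv n k (u ++ v) = (shiftv n k u + shiftv n (k + size u) v)%MM.
Proof.
apply/mnmP => i; rewrite mnmDE !mnmE nth_cat.
case: (leqP k i) => hk; last first.
  by rewrite (leqNgt (k + size u)) (leq_trans hk (leq_addr _ _)).
case: (ltnP (i - k) (size u)) => hu.
  have -> : (k + size u <= i) = false.
    by apply/negbTE; rewrite -ltnNge -(subnKC hk) ltn_add2l.
  by rewrite addn0.
have -> : (k + size u <= i) = true by rewrite -(subnKC hk) leq_add2l.
by rewrite subnDA (nth_default false hu).
Qed.

Lemma shiftv_nil k : shiftv n k [::] = 0%MM.
Proof. by apply/mnmP => i; rewrite mnmE mnm0E nth_nil; case: ifP. Qed.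

Lemma shiftv_false k : shiftv n k [:: false] = 0%MM.
Proof. by apply/mnmP => i; rewrite mnmE mnm0E; case: (k <= i) => //; case: (i - k) => [|j] /=; rewrite ?nth_nil. Qed.

Lemma supp1 m : m \in msupp (1%R : R)%:MP_[n] <-> m = 0%MM.
Proof. by rewrite msupp1 inE; split => /eqP. Qed.

Lemma tr_supp r k : (forall w, lang r w -> size w = len r) -> k + len r <= n ->
  forall m, m \in msupp (fpoly (tr n r k)) <-> exists w, lang r w /\ m = shiftv n k w.
Proof.
elim: r k => [|[]|r1 IH1 r2 IH2|r1 IH1 r2 IH2|r1 IH1] k H hk m /=.
- rewrite supp1; split; first by move=> ->; exists [::]; rewrite shiftv_nil.
  by case=> w [-> ->]; rewrite shiftv_nil.
- have hk' : k < n by rewrite -addn1.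
  rewrite (insubT (fun i => i < n) hk') /= msuppX inE.
  have E : shiftv n k [:: true] = U_(Sub k hk')%MM.
    apply/mnmP => i; rewrite mnm1E !mnmE.
    case: (leqP k i) => hi.
      case E: (i - k) => [|j] /=.
        have -> : (Sub k hk' == i) = true.
          by apply/eqP/val_inj => /=; apply/eqP; rewrite eqn_leq hi -subn_eq0 E.
        by [].
      have -> : (Sub k hk' == i) = false.
        apply/negbTE/eqP => Ei; move: E; rewrite -Ei /= subnn //.
      by rewrite nth_nil.
    have -> : (Sub k hk' == i) = false.
      by apply/negbTE/eqP => Ei; move: hi; rewrite -Ei /= ltnn.
    by [].
  split; first by move/eqP => ->; exists [:: true]; rewrite E.
  by case=> w [-> ->]; rewrite E.
- rewrite supp1; split; first by move=> ->; exists [:: false]; rewrite shiftv_false.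
  by case=> w [-> ->]; rewrite shiftv_false.
- have [H1 H2] := @homog_plus _ _ H.
  have E : len r2 = len r1.
    apply: esym; apply: homog_len => v Hv; apply: H; by right.
  rewrite supp_add; [|exact: tr_nonneg|exact: tr_nonneg].
  have hk2 : k + len r2 <= n by rewrite E.
  split.
  + case/orP => [/(IH1 k H1 hk) | /(IH2 k H2 hk2)] [w [Hw ->]]; exists w; split => //;
      [left|right]; done.
  + case=> w [[Hw|Hw] ->]; apply/orP; [left; apply/(IH1 k H1 hk)|right; apply/(IH2 k H2 hk2)];
      by exists w.
- have [H1 H2] := @homog_cat _ _ H.
  have hk1 : k + len r1 <= n by apply: leq_trans hk; rewrite addnA leq_addr.
  have hk2 : k + len r1 + len r2 <= n by rewrite -addnA.
  rewrite supp_mul; [|exact: tr_nonneg|exact: tr_nonneg].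
  split.
  + case=> m1 [m2 [-> [/(IH1 k H1 hk1) [u [Hu ->]] /(IH2 _ H2 hk2) [v [Hv ->]]]]].
    exists (u ++ v); split; first by exists u, v.
    by rewrite shiftv_cat (H1 u Hu).
  + case=> w [[u [v [-> [Hu Hv]]]] ->].
    exists (shiftv n k u), (shiftv n (k + len r1) v); split.
      by rewrite shiftv_cat (H1 u Hu).
    split; [apply/(IH1 k H1 hk1) | apply/(IH2 _ H2 hk2)]; [exists u | exists v]; done.
- rewrite supp1; split.
  + by move=> ->; exists [::]; rewrite shiftv_nil; split => //; exact: star_nil.
  + by case=> w [/(homog_star _ _ H) -> ->]; rewrite shiftv_nil.
Qed.

End Tr2.

Lemma shiftv0 n w : shiftv n 0 w = word_vec n w.
Proof. by apply/mnmP => i; rewrite !mnmE subn0. Qed.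

Theorem theorem4p2 (n : nat) (L : seq bool -> Prop) :
  1 <= n ->
  (exists w, L w) ->
  (forall w, L w -> size w = n) ->
  forall r : regex, (forall w, lang r w <-> L w) ->
  Arith_le (lang_vecs n L) (rpn r).
Proof.
move=> _ _ HL r Hr.
have Hsz : forall w, lang r w -> size w = n by move=> w /Hr /HL.
have En := @homog_len _ _ Hsz.
exists (tr n r 0); split; first exact: tr_monotone.
split; last exact: tr_size.
move=> m; rewrite /produced tr_supp; last by rewrite add0n -En.
  split.
  - case=> w [Hw ->]; exists w; split; first exact/Hr.
    by rewrite shiftv0 (Hsz w Hw).
  - case=> w [Lw [Sw ->]]; exists w; split; first exact/Hr.
    by rewrite shiftv0.
by rewrite -En.
Qed.
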